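(* Let $G_1,\ldots,G_n$ be finite non-empty vertex-transitive graphs ordered so that \[\tfrac12\geq\frac{\alpha(G_1)}{|V(G_1)|}=\cdots=\frac{\alpha(G_\ell)}{|V(G_\ell)|}>\frac{\alpha(G_{\ell+1})}{|V(G_{\ell+1})|}\geq\cdots\geq\frac{\alpha(G_n)}{|V(G_n)|},\] where $1\le \ell<n$. Let $H_0=G_1\times\cdots\times G_\ell$ and $G=G_1\times\cdots\times G_n$. Then $G$ is MIS-normal if and only if $H_0$ is MIS-normal and $G_{\ell+1},\ldots,G_n$ are all connected.
   Context: All graphs are finite and simple; a graph is non-empty if it has at least one edge; $\alpha(\cdot)$ is the independence number. The direct product $G\times H$ has vertex set $V(G)\times V(H)$, with $(u_1,v_1)$ adjacent to $(u_2,v_2)$ iff $u_1u_2\in E(G)$ and $v_1v_2\in E(H)$; it is associative, so products of several graphs are well defined. A product $G_1\times\cdots\times G_m$ is called MIS-normal if every maximum independent set of it is the preimage, under the projection onto some factor $G_i$, of an independent set of $G_i$; by convention a product with a single factor ($m=1$) is MIS-normal. *)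

(* Defs.v *)
From mathcomp Require Import all_boot all_order all_algebra.
Set Implicit Arguments. Unset Strict Implicit. Unset Printing Implicit Defensive.
Import Order.TTheory GRing.Theory Num.Theory.

Record graph := Graph {
  vt : finType;
  adj : rel vt;
  adj_sym : symmetric adj;
  adj_irr : irreflexive adj }.
Arguments adj : clear implicits.

Section Generic.
Variables (T : finType) (e : rel T).

Definition indep (S : {set T}) : bool :=
  [forall x in S, forall y in S, ~~ e x y].

Definition alpha : nat := \max_(S : {set T} | indep S) #|S|.

Definition max_indep (S : {set T}) : bool := indep S && (#|S| == alpha).
End Generic.

(* non-empty = at least one edge *)
Definition nonempty_graph (G : graph) : Prop := exists x y : vt G, adj G x y.

Definition is_aut (G : graph) (f : vt G -> vt G) : Prop :=
  bijective f /\ forall x y, adj G (f x) (f y) = adj G x y.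

Definition vertex_transitive (G : graph) : Prop :=
  forall u v : vt G, exists f, @is_aut G f /\ f u = v.

Definition connected (G : graph) : Prop :=
  forall x y : vt G, connect (adj G) x y.

Definition indep_ratio (G : graph) : rat := ((alpha (adj G))%:R / (#|vt G|)%:R)%R.

Definition prodv (I : finType) (G : I -> graph) : finType :=
  {dffun forall i : I, vt (G i)}.

Definition prod_adj (I : finType) (G : I -> graph) : rel (prodv G) :=
  fun x y => [forall i, adj (G i) (x i) (y i)].

Arguments prod_adj {I} G.
Arguments prodv {I} G.

Definition MIS_normal (I : finType) (G : I -> graph) : Prop :=
  forall S : {set prodv G}, max_indep (prod_adj G) S ->
    exists i : I, exists A : {set vt (G i)},
      indep (adj (G i)) A /\ S = [set x : prodv G | x i \in A].

Arguments indep_ratio : clear implicits.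
Arguments nonempty_graph : clear implicits.
Arguments vertex_transitive : clear implicits.
Arguments connected : clear implicits.
Arguments MIS_normal {I} G.

(* Main.v *)
Require Import Defs.
From mathcomp Require Import all_boot all_order all_algebra all_fingroup.
From mathcomp Require Import zify ring lra.
Import Order.TTheory GRing.Theory Num.Theory.

Section NLsec.
Variables (T : finType) (e : rel T).

Definition Nc (I : {set T}) : {set T} := [set x | (x \in I) || [exists y in I, e y x]].

Lemma indepP (S : {set T}) : reflect (forall x y, x \in S -> y \in S -> ~~ e x y) (indep e S).
Proof.
apply: (iffP forallP) => [H x y xS yS | H x].
  by have /implyP/(_ xS)/forallP/(_ y)/implyP/(_ yS) := H x.
by apply/implyP => xS; apply/forallP => y; apply/implyP => yS; apply: H.
Qed.

Lemma sum_eq_in (a : T) (J : {set T}) : (\sum_(j in J) (a == j) = (a \in J))%N.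
Proof.
case: (boolP (a \in J)) => aJ.
  rewrite (bigD1 a) //= eqxx big1 // => j /andP[_ ja].
  by rewrite eq_sym (negbTE ja).
by rewrite big1 // => j jJ; apply/eqP; rewrite eqb0; apply: contra aJ => /eqP ->.
Qed.

Lemma card_sum (U : finType) (X : {set U}) (P : pred U) : #|[set x in X | P x]| = (\sum_(x in X) P x)%N.
Proof.
rewrite -sum1_card (eq_bigl (fun x => (x \in X) && P x)); last by move=> x; rewrite inE.
by rewrite big_mkcondr /=; apply: eq_bigr => x _; case: (P x).
Qed.

Lemma NL (A : {group {perm T}}) (u : T) (I : {set T}) :
  symmetric e -> (forall s, s \in A -> forall x y, e (s x) (s y) = e x y) ->
  I \subset orbit 'P A u -> indep e I ->
  exists J : {set T}, [/\ J \subset orbit 'P A u, indep e J &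
     (#|I| * #|orbit 'P A u| <= #|J| * #|Nc I :&: orbit 'P A u|)%N].
Proof.
move=> esym Ae ID Iind.
set D := orbit 'P A u.
have DA : forall s x, s \in A -> x \in D -> s x \in D.
  move=> s x sA /orbitP[a aA <-]; apply/orbitP; exists (a * s)%g; first by rewrite groupM.
  by rewrite /= !apermE permM.
have P0 : (set0 \subset D) && indep e set0.
  by rewrite sub0set; apply/indepP => x y; rewrite inE.
case: (@arg_maxnP {set T} set0 [pred J : {set T} | (J \subset D) && indep e J] (fun J : {set T} => #|J|) P0).
move=> J /andP[JD Jind] Jmax.
exists J; split => //.
set N := Nc I :&: D.
have IN : I \subset N.
  apply/subsetP => x xI; rewrite !inE xI /=; exact: (subsetP ID).
have key : forall s, s \in A -> (#|I| <= #|[set x in N | s x \in J]|)%N.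
  move=> s sA.
  set J' := (J :\: (s @: N)) :|: (s @: I).
  have J'P : (J' \subset D) && indep e J'.
    apply/andP; split.
      apply/subsetP => x; rewrite !inE => /orP[/andP[_ xJ]|/imsetP[y yI ->]].
        exact: (subsetP JD).
      by apply: DA => //; apply: (subsetP ID).
    apply/indepP => x y.
    have cross : forall x b, x \in J :\: s @: N -> b \in I -> ~~ e (s b) x.
      move=> x0 b; rewrite !inE => /andP[xN xJ] bI; apply/negP => ebx.
      have xD : x0 \in D := subsetP JD _ xJ.
      have x'D : (s^-1)%g x0 \in D by apply: DA => //; rewrite groupV.
      move/negP: xN; apply; apply/imsetP; exists ((s^-1)%g x0); last by rewrite permKV.
      rewrite !inE x'D andbT; apply/orP; right; apply/existsP; exists b.
      by rewrite bI /= -(Ae s sA) permKV.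
    rewrite !inE => /orP[xJ|/imsetP[a aI ->]] /orP[yJ|/imsetP[b bI ->]].
    - by move: xJ yJ => /andP[_ xJ] /andP[_ yJ]; apply: (indepP _ Jind).
    - rewrite esym; apply: cross => //; by rewrite !inE.
    - by apply: cross => //; rewrite !inE.
    - by rewrite (Ae s sA); apply: (indepP _ Iind).
  have := Jmax _ J'P.
  have sinj : injective s by apply: perm_inj.
  have dis : [disjoint (J :\: s @: N) & s @: I].
    rewrite -setI_eq0; apply/eqP/setP => x; rewrite !inE.
    apply/negP => /andP[/andP[xN _] /imsetP[b bI xe]].
    by move/negP: xN; apply; rewrite xe; apply: imset_f; apply: (subsetP IN).
  rewrite /J' cardsU (_ : _ :&: _ = set0); last by apply/eqP; rewrite setI_eq0.
  rewrite cards0 subn0 card_imset //.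
  have -> : #|[set x in N | s x \in J]| = #|J :&: s @: N|.
    rewrite -(card_imset _ sinj); apply: eq_card => x; rewrite [in RHS]inE.
    apply/imsetP/andP => [[y] | [xJ /imsetP[y yN xE]]].
      by rewrite inE => /andP[yN yJ] ->; split => //; apply: imset_f.
    by exists y; rewrite // inE yN -xE xJ.
  rewrite -(cardsID (s @: N) J) /=; lia.
have sumA : (#|A| * #|I| <= \sum_(s in A) #|[set x in N | s x \in J]|)%N.
  by rewrite -sum_nat_const; apply: leq_sum => s sA; exact: key.
have eq1 : (\sum_(s in A) #|[set x in N | s x \in J]| =
   \sum_(x in N) \sum_(j in J) #|[set s in A | s x == j]|)%N.
  under eq_bigr do rewrite card_sum.
  rewrite exchange_big /=; apply: eq_bigr => x xN.
  under eq_bigr do rewrite -sum_eq_in.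
  rewrite exchange_big /=; apply: eq_bigr => j jJ.
  by rewrite card_sum.
have H2 : forall x, x \in N -> forall j, j \in J -> (#|[set s in A | s x == j]| * #|D| = #|A|)%N.
  move=> x xN j jJ.
  have xD : x \in D by move: xN; rewrite inE => /andP[].
  have jD : j \in D := subsetP JD _ jJ.
  have Dx : orbit 'P A x = D by apply/orbit_eqP.
  have : j \in orbit 'P A x by rewrite Dx.
  case/orbitP => a aA aj.
  have -> : [set s in A | s x == j] = amove 'P A x j.
    by apply/setP => s; rewrite !inE.
  rewrite -aj amove_act ?subsetT // card_rcoset mulnC -Dx.
  exact: card_orbit_stab.
have H3 : (\sum_(x in N) \sum_(j in J) #|[set s in A | s x == j]| * #|D| = #|N| * (#|J| * #|A|))%N.
  rewrite -sum_nat_const; apply: eq_bigr => x xN.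
  rewrite -sum_nat_const; apply: eq_bigr => j jJ.
  exact: H2.
have Apos : (0 < #|A|)%N by apply/card_gt0P; exists 1%g; apply: group1.
move: sumA; rewrite eq1 => sumA.
have : (#|A| * #|I| * #|D| <= #|N| * (#|J| * #|A|))%N.
  rewrite -H3; under eq_bigr do rewrite -big_distrl.
  by rewrite -big_distrl /= leq_mul2r sumA orbT.
move=> H; rewrite -(leq_pmul2l Apos) mulnA.
apply: (leq_trans H).
have -> : (#|N| * (#|J| * #|A|) = #|A| * (#|J| * #|N|))%N by ring.
by [].
Qed.
End NLsec.

Section Classes.
Variable T : finType.
Local Open Scope ring_scope.

Lemma card_classes (f : T -> {set T}) (X : {set T}) :
  (forall z w, (w \in f z) = (f w == f z)) ->
  #|X| = (\sum_(c in f @: X) #|X :&: c|)%N.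
Proof.
move=> Hf; rewrite -sum1_card (partition_big_imset f X); apply: eq_bigr => c /imsetP[x xX ->].
rewrite -sum1_card; apply: eq_bigl => w; rewrite !inE Hf.
by [].
Qed.

Lemma class_sum (f : T -> {set T}) (X Y : {set T}) (r : rat) :
  (forall z w, (w \in f z) = (f w == f z)) -> X \subset Y -> 0 <= r ->
  (forall x, x \in X -> (#|X :&: f x|%:R <= r * #|Y :&: f x|%:R)) ->
  (#|X|%:R <= r * #|Y|%:R).
Proof.
move=> Hf XY r0 H.
rewrite (card_classes f X Hf) (card_classes f Y Hf) !natr_sum mulr_sumr.
have sub : f @: X \subset f @: Y by apply: imsetS.
rewrite [X in _ <= X](big_setID (f @: X)) /= (setIidPr sub).
apply: ler_wpDr.
  by apply: sumr_ge0 => c _; rewrite mulr_ge0 // ler0n.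
apply: ler_sum => c /imsetP[x xX ->]; exact: H.
Qed.
End Classes.

Section Alpha.
Variables (T : finType) (e : rel T).

Lemma alpha_ge (S : {set T}) : indep e S -> (#|S| <= alpha e)%N.
Proof. by move=> H; apply: (leq_bigmax_cond S). Qed.

Lemma alpha_att : exists S : {set T}, indep e S /\ #|S| = alpha e.
Proof.
have Hp : (0 < #|[pred S : {set T} | indep e S]|)%N.
  by apply/card_gt0P; exists set0; rewrite inE; apply/indepP => x y; rewrite inE.
case: (eq_bigmax_cond (fun S : {set T} => #|S|) Hp) => S SI HS.
by exists S; split => //; rewrite /alpha HS.
Qed.

Lemma indep_sub (S S' : {set T}) : S \subset S' -> indep e S' -> indep e S.
Proof.
move=> sub /indepP H; apply/indepP => x y xS yS; apply: H; exact: (subsetP sub).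
Qed.
End Alpha.
Arguments indepP {T e S}.
Arguments NL {T e A u I}.
Arguments alpha_ge {T e S}.
Arguments indep_sub {T e S S'}.
Arguments class_sum {T} f {X Y r}.
Arguments Nc {T} e I.
Arguments alpha_att {T} e.

Section Gen.
Variables (I : finType) (G : I -> graph).
Local Notation Z := (prodv G).

Definition adjK (K : {set I}) : rel Z :=
  fun z w => [forall k in K, adj (G k) (z k) (w k)].

Definition upd (z : Z) (k : I) (v : vt (G k)) : Z :=
  [ffun i => if @eqP _ k i is ReflectT e then ecast i (vt (G i)) e v else z i].

Lemma upd_same (z : Z) (k : I) (v : vt (G k)) : upd z k v k = v.
Proof. by rewrite /upd ffunE; case: eqP => // e; rewrite eq_axiomK. Qed.

Lemma upd_other (z : Z) (k : I) (v : vt (G k)) i : i != k -> upd z k v i = z i.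
Proof. by move=> ik; rewrite /upd ffunE; case: eqP => // e; rewrite e eqxx in ik. Qed.

Lemma foldr_prod (s : seq nat) : foldr muln 1 s = (\prod_(i <- s) i)%N.
Proof. elim: s => [|a s IH] /=; first by rewrite big_nil. by rewrite big_cons IH. Qed.

Lemma card_box (F : forall i, {set vt (G i)}) :
  #|[set z : Z | [forall i, z i \in F i]]| = (\prod_i #|F i|)%N.
Proof.
have := card_family (fun i => mem (F i) : pred _).
rewrite /= foldr_prod big_map big_enum /= => H.
rewrite -H; apply: eq_card => z; rewrite inE; apply/forallP/familyP => //.
Qed.

Lemma upd_upd (z : Z) (k : I) (v v' : vt (G k)) : upd (upd z k v) k v' = upd z k v'.
Proof.
apply/ffunP => i; case: (eqVneq i k) => [->|ik]; first by rewrite !upd_same.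
by rewrite !upd_other.
Qed.

Lemma upd_id (z : Z) (k : I) : upd z k (z k) = z.
Proof.
apply/ffunP => i; case: (eqVneq i k) => [->|ik]; first by rewrite !upd_same.
by rewrite !upd_other.
Qed.

Lemma adjKP (K : {set I}) (z w : Z) : reflect (forall k, k \in K -> adj (G k) (z k) (w k)) (adjK K z w).
Proof.
apply: (iffP forallP) => [H k kK | H k]; first by have /implyP := H k; apply.
by apply/implyP; apply: H.
Qed.

Lemma adjK_sym (K : {set I}) : symmetric (adjK K).
Proof.
move=> z w; apply/adjKP/adjKP => H k kK; rewrite adj_sym; exact: H.
Qed.

Lemma adjK_loc (K : {set I}) (z z' w : Z) : (forall k, k \in K -> z k = z' k) -> adjK K z w = adjK K z' w.
Proof.
move=> H; apply/adjKP/adjKP => H' k kK; [rewrite -H | rewrite H] => //; exact: H'.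
Qed.

Lemma adjK_U (A B : {set I}) (z w : Z) : adjK (A :|: B) z w = adjK A z w && adjK B z w.
Proof.
apply/adjKP/andP => [H | [/adjKP HA /adjKP HB] k].
  by split; apply/adjKP => k kk; apply: H; rewrite inE kk ?orbT.
by rewrite inE => /orP[] kk; [apply: HA | apply: HB].
Qed.

Lemma adjK1 (k : I) (z w : Z) : adjK [set k] z w = adj (G k) (z k) (w k).
Proof.
apply/adjKP/idP => [H | H i]; first by apply: H; rewrite inE.
by rewrite inE => /eqP ->.
Qed.

Lemma adjK_irr (K : {set I}) (z : Z) : K != set0 -> adjK K z z = false.
Proof.
case/set0Pn => k kK; apply/negP => /adjKP/(_ k kK).
by rewrite adj_irr.
Qed.

Lemma adjK0 (z w : Z) : adjK set0 z w.
Proof. by apply/adjKP => k; rewrite inE. Qed.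

Lemma prod_adjE (z w : Z) : prod_adj G z w = adjK setT z w.
Proof.
apply/forallP/adjKP => H k //; exact: H.
Qed.

Definition Vc k := #|vt (G k)|.
Definition R0 k := (\prod_(i | i != k) Vc i)%N.

Lemma card_box1 k (F : forall i, {set vt (G i)}) :
  (forall i, i != k -> F i = setT) ->
  #|[set z : Z | [forall i, z i \in F i]]| = (#|F k| * R0 k)%N.
Proof.
move=> HF; rewrite card_box (bigD1 k) //=; congr (_ * _)%N.
by apply: eq_bigr => i ik; rewrite HF // cardsT.
Qed.

Lemma card_Z k : #|Z| = (Vc k * R0 k)%N.
Proof.
have := card_box1 k (fun i => setT) (fun _ _ => erefl); rewrite cardsT => <-.
by apply: eq_card => z; rewrite !inE; symmetry; apply/forallP => i; rewrite inE.
Qed.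

Definition line (z : Z) k := [set w : Z | [forall i, (i != k) ==> (w i == z i)]].
Definition hyp (z : Z) k := [set w : Z | w k == z k].

Lemma card_line (z : Z) (k : I) : #|line z k| = Vc k.
Proof.
rewrite /Vc.
have := card_box (fun i => if i == k then setT else [set z i]).
rewrite (bigD1 k) //= eqxx cardsT big1 ?muln1; last first.
  by move=> i ik; rewrite (negbTE ik) cards1.
move=> <-; apply: eq_card => w; rewrite !inE.
apply/forallP/forallP => H i; move: (H i).
  by case: (eqVneq i k) => [->|ik]; rewrite ?inE.
by case: (eqVneq i k) => [->|ik] //=; rewrite ?inE.
Qed.

Lemma card_hyp (z : Z) (k : I) : #|hyp z k| = R0 k.
Proof.
have := card_box1 k (fun i => if i == k then [set z i] else setT).
rewrite eqxx cards1 mul1n => <-; last by move=> i ik; rewrite (negbTE ik).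
apply: eq_card => w; rewrite !inE.
apply/eqP/forallP => [wk i | H]; last by move: (H k); rewrite eqxx inE => /eqP.
by case: (eqVneq i k) => [->|ik]; rewrite ?eqxx ?inE ?wk // (negbTE ik).
Qed.

Lemma hyp_refl (z : Z) k : z \in hyp z k.
Proof. by rewrite inE. Qed.

Lemma line_sym (z w : Z) k : (w \in line z k) = (z \in line w k).
Proof.
by rewrite !inE; apply/forallP/forallP => H i; move: (H i); case: (i != k) => //=; rewrite eq_sym.
Qed.

Lemma line_trans (x y z : Z) k : x \in line y k -> y \in line z k -> x \in line z k.
Proof.
rewrite !inE => /forallP H1 /forallP H2; apply/forallP => i; apply/implyP => ik.
by rewrite (eqP (implyP (H1 i) ik)) (implyP (H2 i) ik).
Qed.

Lemma line_refl (z : Z) k : z \in line z k.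
Proof. by rewrite inE; apply/forallP => i; rewrite eqxx implybT. Qed.

Lemma line_eq (z w : Z) k : w \in line z k -> w k = z k -> w = z.
Proof.
rewrite inE => /forallP H wk; apply/ffunP => i.
by case: (eqVneq i k) => [->|ik] //; apply/eqP; apply: (implyP (H i)).
Qed.

Definition Aset (M : pred I) (K : {set I}) : {set {perm Z}} :=
  [set s : {perm Z} | [forall x, forall i, (i \notin M) ==> (s x i == x i)] &&
      [forall x, forall y, adjK K (s x) (s y) == adjK K x y]].

Lemma Aset_group (M : pred I) (K : {set I}) : group_set (Aset M K).
Proof.
apply/group_setP; split.
  rewrite inE; apply/andP; split; apply/forallP => x;
    [apply/forallP => i | apply/forallP => y]; by rewrite !perm1 ?eqxx ?implybT.
move=> s t; rewrite !inE => /andP[/forallP s1 /forallP s2] /andP[/forallP t1 /forallP t2].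
apply/andP; split; apply/forallP => x;
  [apply/forallP => i; apply/implyP => iM | apply/forallP => y].
  rewrite permM.
  by rewrite (eqP (implyP (forallP (t1 (s x)) i) iM)) (implyP (forallP (s1 x) i) iM).
by rewrite !permM (eqP (forallP (t2 (s x)) (s y))) (forallP (s2 x) y).
Qed.

Canonical Agroup (M : pred I) (K : {set I}) := group (Aset_group M K).

Lemma Agroup_fix (M : pred I) (K : {set I}) s (x : Z) i :
  s \in Agroup M K -> i \notin M -> s x i = x i.
Proof.
rewrite inE => /andP[/forallP H _] iM; by have /forallP/(_ i)/implyP/(_ iM)/eqP := H x.
Qed.

Lemma Agroup_adj (M : pred I) (K : {set I}) s :
  s \in Agroup M K -> forall x y, adjK K (s x) (s y) = adjK K x y.
Proof.
rewrite inE => /andP[_ /forallP H] x y; by have /forallP/(_ y)/eqP := H x.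
Qed.

Lemma orbit_Agroup (M : pred I) (K : {set I}) (u : Z) :
  (forall i, i \in M -> vertex_transitive (G i)) ->
  orbit 'P (Agroup M K) u = [set w : Z | [forall i, (i \notin M) ==> (w i == u i)]].
Proof.
move=> VT; apply/setP => w; rewrite inE; apply/orbitP/idP.
  case=> s sA <-; apply/forallP => i; apply/implyP => iM.
  by rewrite /= apermE (@Agroup_fix M K s u i sA iM).
move=> Hw.
have : forall i, exists f : vt (G i) -> vt (G i),
    is_aut f /\ f (u i) = w i /\ (i \notin M -> forall v, f v = v).
  move=> i; case: (boolP (i \in M)) => iM.
    by case: (VT i iM (u i) (w i)) => f [fa fu]; exists f; split => //; split => //; rewrite iM.
  exists id; split; first by split => //; exists id.
  by split => //; have /forallP/(_ i)/implyP/(_ iM)/eqP := Hw.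
case/fin_all_exists => f Hf.
have finj : forall i, injective (f i).
  by move=> i; case: (Hf i) => [[fb _] _]; apply: bij_inj.
pose g := fun z : Z => [ffun i => f i (z i)] : Z.
have ginj : injective g.
  move=> z1 z2 /ffunP E; apply/ffunP => i; move: (E i); rewrite !ffunE; apply: finj.
exists (perm ginj); last first.
  by rewrite /= apermE permE; apply/ffunP => i; rewrite /g ffunE; case: (Hf i) => _ [-> _].
rewrite inE; apply/andP; split; apply/forallP => x.
  apply/forallP => i; apply/implyP => iM; rewrite permE /g ffunE.
  by case: (Hf i) => _ [_ ->].
apply/forallP => y; rewrite !permE; apply/eqP; apply/adjKP/adjKP => H k kK; move: (H k kK);
  by rewrite /g !ffunE; case: (Hf k) => [[_ ->]].
Qed.

Lemma line_orbit (k0 : I) (K : {set I}) (x : Z) : vertex_transitive (G k0) ->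
  orbit 'P (Agroup (pred1 k0) K) x = line x k0.
Proof.
move=> VT; rewrite orbit_Agroup; last by move=> i; rewrite inE => /eqP ->.
by apply/setP => w; rewrite !inE.
Qed.

Lemma hyp_orbit (k0 : I) (K : {set I}) (x : Z) : (forall i, vertex_transitive (G i)) ->
  orbit 'P (Agroup (predC1 k0) K) x = hyp x k0.
Proof.
move=> VT; rewrite orbit_Agroup; last by move=> i _; apply: VT.
apply/setP => w; rewrite !inE; apply/forallP/idP => [H | H i].
  by have := H k0; rewrite /= negbK eqxx.
by rewrite /= negbK; apply/implyP => /eqP ->.
Qed.

Lemma line_class (k0 : I) (z w : Z) : (w \in line z k0) = (line w k0 == line z k0).
Proof.
apply/idP/eqP => [wz | <-]; last exact: line_refl.
apply/setP => y; apply/idP/idP => H; first exact: line_trans H wz.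
by apply: line_trans H _; rewrite line_sym.
Qed.

Lemma hyp_class (k0 : I) (z w : Z) : (w \in hyp z k0) = (hyp w k0 == hyp z k0).
Proof.
rewrite inE; apply/eqP/eqP => [E | E].
  by apply/setP => y; rewrite !inE E.
by have := hyp_refl w k0; rewrite E inE => /eqP.
Qed.

Lemma spread_bound (k0 : I) (K' : {set I}) (rho2 : rat) (x : Z) (J : {set Z}) :
  k0 \notin K' ->
  (forall X : {set Z}, indep (adjK K') X -> (#|X|%:R <= rho2 * #|Z|%:R)%R) ->
  J \subset hyp x k0 -> indep (adjK K') J ->
  ((#|J| * Vc k0)%:R <= rho2 * #|Z|%:R)%R.
Proof.
move=> k0K HB JH Jind.
set X := [set w : Z | upd w k0 (x k0) \in J].
have loc : forall a : Z, forall k, k \in K' -> upd a k0 (x k0) k = a k.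
  by move=> a k kK; rewrite upd_other //; apply: contraNneq k0K => <-.
have Xind : indep (adjK K') X.
  apply/indepP => a b; rewrite !inE => aJ bJ.
  have := (indepP Jind) _ _ aJ bJ.
  by rewrite (adjK_loc K' _ _ _ (loc a)) adjK_sym (adjK_loc K' _ _ _ (loc b)) adjK_sym.
have cX : #|X| = (#|J| * Vc k0)%N.
  rewrite -sum1_card (partition_big (fun w => upd w k0 (x k0)) (mem J)) /=; last first.
    by move=> w; rewrite inE.
  rewrite -sum_nat_const; apply: eq_bigr => j jJ.
  have jk : j k0 = x k0 by have := subsetP JH _ jJ; rewrite inE => /eqP.
  rewrite -(card_line j k0) -sum1_card; apply: eq_bigl => w.
  rewrite inE; apply/andP/idP => [[_ /eqP E] | wl].
    rewrite inE; apply/forallP => i; apply/implyP => ik.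
    by rewrite -E upd_other.
  have E : upd w k0 (x k0) = j.
    apply/ffunP => i; case: (eqVneq i k0) => [->|ik]; first by rewrite upd_same jk.
    rewrite upd_other //; apply/eqP.
    by move: wl; rewrite inE => /forallP/(_ i)/implyP; apply.
  by rewrite E jJ eqxx.
by rewrite -cX; apply: HB.
Qed.

Lemma ZS (k0 : I) (K' : {set I}) (rho2 : rat) (S : {set Z}) :
  (forall i, vertex_transitive (G i)) -> k0 \notin K' -> (0 <= rho2)%R ->
  (forall X : {set Z}, indep (adjK K') X -> (#|X|%:R <= rho2 * #|Z|%:R)%R) ->
  indep (adjK (k0 |: K')) S ->
  exists P D1 D2 : {set Z}, [/\ P \subset S, P \subset D1, [disjoint D1 & D2],
     (forall s w, s \in S -> s \notin P -> w \in S -> w k0 = s k0 -> ~~ adjK K' s w) &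
     (#|S|%:R <= indep_ratio (G k0) * #|D1|%:R + rho2 * #|D2|%:R)%R].
Proof.
move=> VT k0K r2 HB Sind.
set e1 := adjK [set k0]; set e2 := adjK K'.
have Se : forall s w : Z, s \in S -> w \in S -> ~~ (e1 s w && e2 s w).
  by move=> s w sS wS; rewrite /e1 /e2 -adjK_U; move/indepP: Sind; apply.
have e1loc : forall s s' w : Z, s k0 = s' k0 -> e1 s w = e1 s' w.
  by move=> s s' w E; apply: adjK_loc => k; rewrite inE => /eqP ->.
have e2loc : forall s s' w : Z, s \in line s' k0 -> e2 s w = e2 s' w.
  move=> s s' w; rewrite inE => /forallP H; apply: adjK_loc => k kK.
  have kk0 : k != k0 by apply: contraNneq k0K => <-.
  by have /implyP/(_ kk0)/eqP := H k.
have e1s : symmetric e1 by apply: adjK_sym.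
have e2s : symmetric e2 by apply: adjK_sym.
set P := [set s in S | [forall w in S, (w \in line s k0) ==> ~~ e1 s w]].
have PS : P \subset S by apply/subsetP => s; rewrite inE => /andP[].
have Pprop : forall s w : Z, s \in P -> w \in S -> w \in line s k0 -> ~~ e1 s w.
  move=> s w; rewrite inE => /andP[_ /forallP H] wS wl.
  by have /implyP/(_ wS)/implyP/(_ wl) := H w.
have Qprop : forall s w : Z, s \in S -> s \notin P -> w \in S -> w k0 = s k0 -> ~~ e2 s w.
  move=> s w sS sP wS wk; apply/negP => esw.
  move: sP; rewrite inE sS /= negb_forall => /existsP[w'].
  rewrite negb_imply => /andP[w'S]; rewrite negb_imply negbK => /andP[w'l esw'].
  have := Se w' w w'S wS.
  by rewrite e1s (e1loc w s w' wk) esw' /= (e2loc _ _ _ w'l) esw.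
set Q := S :\: P.
set D1 := [set w : Z | [exists s in P, (s \in line w k0) && ((s == w) || e1 s w)]].
set D2 := [set w : Z | [exists t in Q, (t k0 == w k0) && ((t == w) || e2 t w)]].
have PD1 : P \subset D1.
  by apply/subsetP => s sP; rewrite inE; apply/existsP; exists s; rewrite sP line_refl eqxx.
exists P, D1, D2; split => //.
  rewrite -setI_eq0; apply/eqP/setP => w; rewrite !inE; apply/negP.
  case/andP => /existsP[s /andP[sP /andP[sl ss]]] /existsP[t /andP[tQ /andP[/eqP tk tt]]].
  have sS := subsetP PS s sP.
  move: tQ; rewrite inE => /andP[tP tS].
  case/orP: ss => [/eqP esw | es]; case/orP: tt => [/eqP etw | et].
  - by move: tP; rewrite etw -esw sP.
  - have E : s k0 = t k0 by rewrite esw tk.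
    by move: (Qprop t s tS tP sS E); rewrite esw et.
  - by move: (Pprop s t sP tS); rewrite etw line_sym sl es => /(_ isT).
  - have := Se s t sS tS.
    by rewrite (e1s s t) (e1loc t w s tk) (e1s w s) es (e2loc _ _ _ sl) e2s et.
rewrite -(cardsID P S) (setIidPr PS) natrD.
have r1pos : (0 <= indep_ratio (G k0))%R by rewrite /indep_ratio divr_ge0 ?ler0n.
apply: lerD.
  apply: (class_sum (fun z => line z k0) (line_class k0) PD1 r1pos) => x xP.
  have IcL : P :&: line x k0 \subset orbit 'P (Agroup (pred1 k0) [set k0]) x.
    by rewrite line_orbit // subsetIr.
  have Icind : indep e1 (P :&: line x k0).
    apply/indepP => a b /setIP[aP al] /setIP[bP bl].
    apply: Pprop aP (subsetP PS _ bP) _.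
    by apply: line_trans bl _; rewrite line_sym.
  have [J [JD Jind Hineq]] := NL e1s (Agroup_adj (pred1 k0) [set k0]) IcL Icind.
  rewrite line_orbit // card_line in Hineq JD.
  have Ja : (#|J| <= alpha (adj (G k0)))%N.
    rewrite -(card_in_imset (f := fun w : Z => w k0)); last first.
      move=> a b aJ bJ E; apply: line_eq E.
      by apply: line_trans (subsetP JD _ aJ) _; rewrite line_sym (subsetP JD _ bJ).
    apply: alpha_ge; apply/indepP => a b /imsetP[a' a'J ->] /imsetP[b' b'J ->].
    by rewrite -adjK1; move/indepP: Jind; apply.
  have Nsub : Nc e1 (P :&: line x k0) :&: line x k0 \subset D1 :&: line x k0.
    apply/subsetP => w /setIP[wN wl]; rewrite in_setI wl andbT inE; apply/existsP.
    move: wN; rewrite inE => /orP[/setIP[wP _] | /existsP[y /andP[/setIP[yP yl] ey]]].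
      by exists w; rewrite wP line_refl eqxx.
    exists y; rewrite yP ey orbT andbT.
    by apply: line_trans yl _; rewrite line_sym.
  have Vpos : (0 < Vc k0)%N by rewrite -(card_line x k0); apply/card_gt0P; exists x; apply: line_refl.
  have H2 := leq_trans Hineq (leq_mul Ja (subset_leq_card Nsub)).
  rewrite /indep_ratio mulrAC ler_pdivlMr ?ltr0n // -!natrM ler_nat.
  exact: H2.
have QD2 : Q \subset D2.
  by apply/subsetP => t tQ; rewrite inE; apply/existsP; exists t; rewrite tQ !eqxx.
apply: (class_sum (fun z => hyp z k0) (hyp_class k0) QD2 r2) => x xQ.
have IcL : Q :&: hyp x k0 \subset orbit 'P (Agroup (predC1 k0) K') x.
  by rewrite hyp_orbit // subsetIr.
have Icind : indep e2 (Q :&: hyp x k0).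
  apply/indepP => a b /setIP[/setDP[aS aP] ah] /setIP[/setDP[bS bP] bh].
  apply: Qprop => //.
  by move: ah bh; rewrite !inE => /eqP -> /eqP ->.
have [J [JD Jind Hineq]] := NL e2s (Agroup_adj (predC1 k0) K') IcL Icind.
rewrite hyp_orbit // card_hyp in Hineq JD.
have HJ := spread_bound k0 K' rho2 x J k0K HB JD Jind.
have Nsub : Nc e2 (Q :&: hyp x k0) :&: hyp x k0 \subset D2 :&: hyp x k0.
  apply/subsetP => w /setIP[wN wh]; rewrite in_setI wh andbT inE; apply/existsP.
  move: wN; rewrite inE => /orP[/setIP[wQ _] | /existsP[y /andP[/setIP[yQ yh] ey]]].
    by exists w; rewrite wQ !eqxx.
  exists y; rewrite yQ ey orbT andbT.
  by move: yh wh; rewrite !inE => /eqP yx /eqP wx; rewrite yx wx eqxx.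
have Rpos : (0 < R0 k0)%N by rewrite -(card_hyp x k0); apply/card_gt0P; exists x; apply: hyp_refl.
have Vpos : (0 < Vc k0)%N by rewrite -(card_line x k0); apply/card_gt0P; exists x; apply: line_refl.
have H2 := leq_trans Hineq (leq_mul (leqnn #|J|) (subset_leq_card Nsub)).
set N' := #|D2 :&: hyp x k0| in H2 *.
set c := #|Q :&: hyp x k0| in H2 *.
have A1 : ((c * (R0 k0 * Vc k0))%:R <= (#|J| * Vc k0)%:R * N'%:R :> rat)%R.
  rewrite -natrM ler_nat mulnA.
  have -> : (#|J| * Vc k0 * N' = #|J| * N' * Vc k0)%N by ring.
  by rewrite leq_mul2r H2 orbT.
have A2 : ((#|J| * Vc k0)%:R * N'%:R <= rho2 * (R0 k0 * Vc k0)%:R * N'%:R :> rat)%R.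
  by rewrite ler_wpM2r ?ler0n // (mulnC (R0 k0)) -(card_Z k0).
rewrite -(@ler_pM2r _ (R0 k0 * Vc k0)%:R); last by rewrite ltr0n muln_gt0 Rpos.
rewrite -natrM; apply: (le_trans A1); apply: (le_trans A2).
by rewrite mulrAC.
Qed.

Lemma zhang (K : {set I}) (rho : rat) :
  (forall i, vertex_transitive (G i)) -> (0 <= rho)%R ->
  (forall k, k \in K -> (indep_ratio (G k) <= rho)%R) ->
  forall S : {set Z}, indep (adjK K) S -> (#|S|%:R <= rho * #|Z|%:R)%R.
Proof.
move=> VT r0; have [m Hm] := ubnP #|K|; elim: m K Hm => // m IH K Km Kr S Sind.
case: (set_0Vmem K) => [K0 | [k0 k0K]].
  have -> : S = set0.
    apply/setP => s; rewrite inE; apply/negP => sS.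
    by have := (indepP Sind) _ _ sS sS; rewrite K0 adjK0.
  by rewrite cards0 mulr_ge0 ?ler0n.
have KE : K = k0 |: (K :\ k0) by rewrite setD1K.
have k0K' : k0 \notin K :\ k0 by rewrite setD11.
have IH' := IH (K :\ k0).
have Hc : (#|K :\ k0| < m)%N.
  by move: Km; rewrite (cardsD1 k0 K) k0K.
rewrite KE in Sind.
have [P [D1 [D2 [_ _ dis _ H]]]] := ZS k0 (K :\ k0) rho S VT k0K' r0
  (IH' Hc (fun k kK => Kr k (subsetP (subD1set K k0) k kK))) Sind.
apply: (le_trans H).
have d : (#|D1| + #|D2| <= #|Z|)%N.
  rewrite -cardsUI (_ : D1 :&: D2 = set0) ?cards0 ?addn0 ?max_card //.
  by apply/eqP; rewrite setI_eq0.
apply: (@le_trans _ _ (rho * #|D1|%:R + rho * #|D2|%:R)%R).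
  by rewrite lerD2r ler_wpM2r ?ler0n // Kr.
by rewrite -mulrDr ler_wpM2l // -natrD ler_nat.
Qed.

Lemma indep_eq (e e' : rel Z) (S : {set Z}) : e =2 e' -> indep e S = indep e' S.
Proof.
move=> E; apply/indepP/indepP => H x y xS yS; [rewrite -E | rewrite E]; exact: H.
Qed.

Lemma alpha_le (rho : rat) :
  (forall i, vertex_transitive (G i)) -> (0 <= rho)%R ->
  (forall k, (indep_ratio (G k) <= rho)%R) ->
  ((alpha (prod_adj G))%:R <= rho * #|Z|%:R)%R.
Proof.
move=> VT r0 Kr; have [S [Sind <-]] := alpha_att (prod_adj G).
apply: (zhang setT) => //; rewrite -(indep_eq _ _ _ prod_adjE) //.
Qed.

Definition Fset (k : I) (A : {set vt (G k)}) (i : I) : {set vt (G i)} :=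
  if @eqP _ k i is ReflectT e then ecast i {set vt (G i)} e A else setT.

Lemma Fset_k k A : Fset k A k = A.
Proof. by rewrite /Fset; case: eqP => // e; rewrite eq_axiomK. Qed.

Lemma Fset_other k A i : i != k -> Fset k A i = setT.
Proof. by move=> ik; rewrite /Fset; case: eqP => // e; rewrite e eqxx in ik. Qed.

Lemma card_pre (k : I) (A : {set vt (G k)}) : #|[set z : Z | z k \in A]| = (#|A| * R0 k)%N.
Proof.
rewrite -(Fset_k k A) -(card_box1 k (Fset k A)); last by move=> i ik; rewrite Fset_other.
apply: eq_card => z; rewrite !inE; apply/idP/forallP => [H i | H].
  by case: (eqVneq i k) => [->|ik] //; rewrite Fset_other // inE.
exact: H k.
Qed.

Lemma alpha_ge_prod (k : I) : (alpha (adj (G k)) * R0 k <= alpha (prod_adj G))%N.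
Proof.
have [A [Aind <-]] := alpha_att (adj (G k)).
rewrite -card_pre; apply: alpha_ge; apply/indepP => x y; rewrite !inE => xA yA.
apply/negP => /forallP/(_ k); apply/negP; exact: (indepP Aind).
Qed.

Lemma alpha_prod (i0 : I) :
  (forall i, vertex_transitive (G i)) -> (0 < Vc i0)%N ->
  (forall k, (indep_ratio (G k) <= indep_ratio (G i0))%R) ->
  ((alpha (prod_adj G))%:R = indep_ratio (G i0) * #|Z|%:R)%R.
Proof.
move=> VT Vp Kr; apply/eqP; rewrite eq_le alpha_le //; last first.
  by rewrite /indep_ratio divr_ge0 ?ler0n.
have := alpha_ge_prod i0; rewrite -(ler_nat rat) => H; apply: le_trans H.
rewrite (card_Z i0) /indep_ratio natrM mulrA divfK ?pnatr_eq0 -?lt0n //.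
by rewrite natrM.
Qed.

End Gen.
Arguments adjK {I G}.
Arguments upd {I G}.
Arguments upd_same {I G}.
Arguments upd_other {I G}.
Arguments upd_upd {I G}.
Arguments upd_id {I G}.
Arguments adjKP {I G}.
Arguments adjK_sym {I G}.
Arguments adjK_loc {I G}.
Arguments adjK_U {I G}.
Arguments adjK1 {I G}.
Arguments adjK_irr {I G}.
Arguments adjK0 {I G}.
Arguments prod_adjE {I G}.
Arguments Vc {I G}.
Arguments R0 {I G}.
Arguments card_box {I G}.
Arguments card_box1 {I G}.
Arguments card_Z {I G}.
Arguments line {I G}.
Arguments hyp {I G}.
Arguments card_line {I G}.
Arguments card_hyp {I G}.
Arguments hyp_refl {I G}.
Arguments line_refl {I G}.
Arguments line_eq {I G}.
Arguments spread_bound {I G}.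
Arguments ZS {I G}.
Arguments zhang {I G}.
Arguments indep_eq {I G}.
Arguments alpha_le {I G}.
Arguments Fset {I G}.
Arguments card_pre {I G}.
Arguments alpha_ge_prod {I G}.
Arguments alpha_prod {I G}.

Section Facts.
Variables (I : finType) (G : I -> graph).

Lemma Vpos : (forall i, nonempty_graph (G i)) -> forall i, (0 < #|vt (G i)|)%N.
Proof. by move=> Hne i; case: (Hne i) => x [y _]; apply/card_gt0P; exists x. Qed.

Lemma nbr_ex : (forall i, nonempty_graph (G i)) -> (forall i, vertex_transitive (G i)) ->
  exists nb : forall i, vt (G i) -> vt (G i), forall i v, adj (G i) v (nb i v).
Proof.
move=> Hne HVT.
have : forall i, exists nb : vt (G i) -> vt (G i), forall v, adj (G i) v (nb v).
  move=> i.
  have : forall v : vt (G i), exists w, adj (G i) v w.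
    move=> v; case: (Hne i) => a [b ab]; case: (HVT i a v) => f [[_ fa] fv].
    by exists (f b); rewrite -fv fa.
  by case/fin_all_exists => f Hf; exists f.
by case/fin_all_exists => f Hf; exists f.
Qed.

Lemma z0_ex : (forall i, nonempty_graph (G i)) -> exists z0 : prodv G, True.
Proof.
move=> Hne; have : forall i, exists a : vt (G i), True.
  by move=> i; case: (Hne i) => a _; exists a.
by case/fin_all_exists => f _; exists [ffun i => f i].
Qed.
End Facts.
Arguments Vpos {I G}.
Arguments nbr_ex {I G}.
Arguments z0_ex {I G}.


Section Inv.
Variables (I : finType) (G : I -> graph).
Local Notation Z := (prodv G).
Local Open Scope ring_scope.

Lemma inv_coord (i0 : I) (S : {set Z}) (j : I) :
  (forall i, nonempty_graph (G i)) -> (forall i, vertex_transitive (G i)) ->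
  (forall k, indep_ratio (G k) <= indep_ratio (G i0)) ->
  indep_ratio (G j) < indep_ratio (G i0) -> connected (G j) ->
  indep (prod_adj G) S -> #|S|%:R = indep_ratio (G i0) * #|Z|%:R ->
  forall s, s \in S -> forall v, upd s j v \in S.
Proof.
move=> Hne HVT Hr Hlt Hc Sind Scard.
set r := indep_ratio (G i0) in Hr Hlt Scard *.
have r0 : 0 <= r by rewrite /r /indep_ratio divr_ge0 ?ler0n.
have [z0 _] := z0_ex Hne.
set K' := [set: I] :\ j.
have jK' : j \notin K' by rewrite setD11.
have HB := zhang K' r HVT r0 (fun k _ => Hr k).
have SindT : indep (adjK setT) S by rewrite -(indep_eq (prod_adj G) _ S prod_adjE).
have Sind' : indep (adjK (j |: K')) S by rewrite setD1K ?in_setT.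
have [P [D1 [D2 [PS PD1 dis Qp H]]]] := ZS j K' r S HVT jK' r0 HB Sind'.
have D10 : #|D1| = 0%N.
  have d : (#|D1| + #|D2| <= #|Z|)%N.
    rewrite -cardsUI (_ : D1 :&: D2 = set0) ?cards0 ?addn0 ?max_card //.
    by apply/eqP; rewrite setI_eq0.
  have rl := Hlt.
  rewrite Scard in H.
  have d' : #|D1|%:R + #|D2|%:R <= #|Z|%:R :> rat by rewrite -natrD ler_nat.
  have d1p : 0 <= #|D1|%:R :> rat by rewrite ler0n.
  have rjp : 0 <= indep_ratio (G j) by rewrite /indep_ratio divr_ge0 ?ler0n.
  apply/eqP; rewrite -(eqr_nat rat); apply/eqP.
  nra.
have P0 : P = set0.
  apply/eqP; rewrite -subset0; apply: subset_trans PD1 _.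
  by rewrite subset0 -cards_eq0 D10.
have Qp' : forall s w, s \in S -> w \in S -> w j = s j -> ~~ adjK K' s w.
  by move=> s w sS wS wj; apply: Qp => //; rewrite P0 inE.
have Vp := Vpos Hne j.
have hb : forall (y : vt (G j)) (X : {set Z}), X \subset [set w : Z | w j == y] ->
    indep (adjK K') X -> #|X|%:R <= r * (@R0 _ G j)%:R.
  move=> y X Xs Xind.
  have Xh : X \subset hyp (upd z0 j y) j.
    apply/subsetP => w wX; rewrite inE upd_same.
    by have := subsetP Xs w wX; rewrite inE.
  have := spread_bound j K' r (upd z0 j y) X jK' HB Xh Xind.
  rewrite (card_Z j) !natrM mulrCA [X in _ <= X]mulrC ler_pM2r ?ltr0n //.
set Sy := fun y : vt (G j) => [set s in S | s j == y].
have Syind : forall y, indep (adjK K') (Sy y).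
  move=> y; apply/indepP => a b; rewrite !inE => /andP[aS /eqP aj] /andP[bS /eqP bj].
  by apply: Qp' => //; rewrite aj bj.
have Syb : forall y, #|Sy y|%:R <= r * (@R0 _ G j)%:R.
  by move=> y; apply: (hb y) => //; apply/subsetP => w; rewrite !inE => /andP[].
have Ssum : #|S| = (\sum_(y : vt (G j)) #|Sy y|)%N.
  rewrite -sum1_card (partition_big (fun s : Z => s j) predT) //=.
  apply: eq_bigr => y _; rewrite -sum1_card; apply: eq_bigl => s; rewrite !inE.
  by [].
have Syeq : forall y, #|Sy y|%:R = r * (@R0 _ G j)%:R.
  have E : \sum_(y : vt (G j)) (r * (@R0 _ G j)%:R - #|Sy y|%:R) = 0.
    rewrite sumrB sumr_const -natr_sum -Ssum Scard (card_Z j).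
    rewrite (_ : #|_| = @Vc _ G j) // -mulr_natr natrM; ring.
  have Hp : forall y, 0 <= r * (@R0 _ G j)%:R - #|Sy y|%:R by move=> y; rewrite subr_ge0.
  move=> y; have := psumr_eq0P (fun y _ => Hp y) E (i := y) isT.
  by move/eqP; rewrite subr_eq0 => /eqP.
have Kloc : forall (a : Z) (y : vt (G j)) k, k \in K' -> upd a j y k = a k.
  by move=> a y k; rewrite !inE => /andP[kj _]; rewrite upd_other.
have step : forall y y', adj (G j) y y' -> forall t, t \in S -> t j = y' -> upd t j y \in S.
  move=> y y' yy' t tS tj.
  set X := Sy y :|: [set upd u j y | u in Sy y'].
  have XS : X \subset [set w : Z | w j == y].
    apply/subsetP => w; rewrite !inE => /orP[/andP[_ ->] // | /imsetP[u _ ->]].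
    by rewrite upd_same.
  have cross : forall a u, a \in Sy y -> u \in Sy y' -> ~~ adjK K' a (upd u j y).
    move=> a u; rewrite !inE => /andP[aS /eqP aj] /andP[uS /eqP uj].
    rewrite adjK_sym (adjK_loc K' _ u _ (Kloc u y)) adjK_sym.
    apply/negP => au; move: (indepP SindT a u aS uS).
    rewrite -(setD1K (in_setT j)) adjK_U au andbT adjK1 aj uj yy'.
    by [].
  have Xind : indep (adjK K') X.
    apply/indepP => a b; rewrite in_setU => /orP[aY | /imsetP[u uY ->]];
      rewrite in_setU => /orP[bY | /imsetP[u' u'Y ->]].
    - exact: (indepP (Syind y)).
    - exact: cross.
    - by rewrite adjK_sym; apply: cross.
    - rewrite (adjK_loc K' _ u _ (Kloc u y)) adjK_sym (adjK_loc K' _ u' _ (Kloc u' y)) adjK_sym.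
      exact: (indepP (Syind y')).
  have Xb := hb y X XS Xind.
  rewrite -(Syeq y) ler_nat in Xb.
  have Hle := subset_leqif_cards (subsetUl (Sy y) [set upd u j y | u in Sy y']).
  have := geq_leqif Hle; rewrite Xb => /esym/eqP Hx.
  have : upd t j y \in Sy y :|: [set upd u j y | u in Sy y'] by rewrite in_setU; apply/orP; right; apply: imset_f; rewrite inE tS tj eqxx.
  by rewrite -Hx inE => /andP[].
have conn : forall y1 y2, connect (adj (G j)) y1 y2 -> forall t, t \in S -> t j = y1 -> upd t j y2 \in S.
  move=> y1 y2 /connectP[p pth ->] {y2}; elim: p y1 pth => [|y3 p IHp] y1 /= pth t tS tj.
    by rewrite -tj upd_id.
  case/andP: pth => a13 pth.
  have t3 : upd t j y3 \in S by apply: (step y3 y1) => //; rewrite adj_sym.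
  by have := IHp y3 pth _ t3 (upd_same t j y3); rewrite upd_upd.
move=> s sS v; exact: (conn (s j) v (Hc (s j) v) s sS erefl).
Qed.
End Inv.
Arguments inv_coord {I G}.


Section Main.
Variables (n l : nat) (G : 'I_n -> graph) (hln : (l < n)%N).
Local Notation Z := (prodv G).
Definition H0fam := fun i : 'I_l => G (widen_ord (ltnW hln) i).
Local Notation H0 := (prodv H0fam).
Local Notation wid := (widen_ord (ltnW hln)).

Definition res (z : Z) : H0 := [ffun j => z (wid j)].

Lemma resE z j : res z j = z (wid j).
Proof. by rewrite ffunE. Qed.

Definition Fh (h : H0) (i : 'I_n) : {set vt (G i)} :=
  [set v | [forall j : 'I_l, if @eqP _ (wid j) i is ReflectT e then v == ecast i (vt (G i)) e (h j) else true]].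

Lemma Fh_res (h : H0) (z : Z) : (res z == h) = [forall i, z i \in Fh h i].
Proof.
apply/eqP/forallP => [<- i | H].
  rewrite inE; apply/forallP => j; case: eqP => // e.
  by case: i / e; rewrite resE.
apply/ffunP => j; rewrite resE.
have := H (wid j); rewrite inE => /forallP/(_ j).
by case: eqP => // e; rewrite eq_axiomK => /eqP.
Qed.

Definition mfib := (\prod_(i : 'I_n | (l <= i)%N) #|vt (G i)|)%N.

Lemma card_Fh (h : H0) i : #|Fh h i| = (if (i < l)%N then 1 else #|vt (G i)|)%N.
Proof.
case: ltnP => il.
  have e : wid (Ordinal il) = i by apply: val_inj.
  apply/eqP/cards1P; exists (ecast i (vt (G i)) e (h (Ordinal il))).
  apply/setP => v; rewrite !inE; apply/forallP/eqP => [H | -> j].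
    by have := H (Ordinal il); case: eqP => // e'; rewrite (eq_irrelevance e' e) => /eqP.
  case: eqP => // e'.
  have jj : j = Ordinal il by apply: val_inj; move: e' => /(congr1 val) /= ->.
  by subst j; rewrite (eq_irrelevance e' e).
rewrite -cardsT; apply: eq_card => v; rewrite !inE; apply/forallP => j.
case: eqP => // e; exfalso; move: il; rewrite -e /= leqNgt; case/negP.
exact: ltn_ord.
Qed.

Lemma card_fib (h : H0) : #|[set z : Z | res z == h]| = mfib.
Proof.
have := card_box (Fh h); rewrite (eq_card (B := [set z : Z | res z == h])); last first.
  by move=> z; rewrite !inE Fh_res.
move=> ->; rewrite (bigID (fun i : 'I_n => (l <= i)%N)) /=.
rewrite [X in (_ * X)%N]big1 ?muln1; last first.
  by move=> i; rewrite -ltnNge card_Fh => ->.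
by apply: eq_bigr => i li; rewrite card_Fh ltnNge li.
Qed.

Lemma card_preres (T : {set H0}) : #|[set z : Z | res z \in T]| = (#|T| * mfib)%N.
Proof.
rewrite -sum1_card (partition_big res (mem T)) /=; last by move=> z; rewrite inE.
rewrite -sum_nat_const; apply: eq_bigr => h hT.
rewrite -(card_fib h) -sum1_card; apply: eq_bigl => z; rewrite !inE.
by apply/andP/idP => [[] | hz] //; rewrite hz (eqP hz).
Qed.

Lemma card_Z_H0 : #|Z| = (#|H0| * mfib)%N.
Proof.
have := card_preres setT; rewrite cardsT => <-.
by apply: eq_card => z; rewrite !inE.
Qed.

Lemma res_adj (z w : Z) : prod_adj G z w -> prod_adj H0fam (res z) (res w).
Proof.
move/forallP => H; apply/forallP => j; rewrite !resE; exact: H.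
Qed.

Lemma inv_all (S : {set Z}) :
  (forall j : 'I_n, (l <= j)%N -> forall s, s \in S -> forall v, upd s j v \in S) ->
  forall s z, s \in S -> res z = res s -> z \in S.
Proof.
move=> H s z sS E.
suff: forall k (s z : Z), s \in S -> (forall i : 'I_n, ((i < l) || (k <= i))%N -> z i = s i) -> z \in S.
  move=> /(_ n s z sS); apply => i /orP[il | ni]; last by move: (ltn_ord i); rewrite ltnNge ni.
  have e : wid (Ordinal il) = i by apply: val_inj.
  by rewrite -e -!resE E.
elim => [|k IH] s' z' s'S Hz.
  have -> : z' = s' by apply/ffunP => i; apply: Hz; rewrite leq0n orbT.
  done.
case: (ltnP k n) => kn; last first.
  apply: (IH s') => // i /orP[il|ki]; first by apply: Hz; rewrite il.
  by move: (ltn_ord i); rewrite ltnNge (leq_trans kn ki).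
case: (ltnP k l) => kl.
  apply: (IH s') => // i /orP[il|ki]; first by apply: Hz; rewrite il.
  rewrite leq_eqVlt in ki; case/orP: ki => [/eqP ki | ki]; apply: Hz.
    by rewrite -ki kl.
  by rewrite ki orbT.
pose kk := Ordinal kn.
apply: (IH (upd s' kk (z' kk))); first by apply: H.
move=> i /orP[il|ki].
  have ik : i != kk by apply/eqP => e; move: il; rewrite e /= ltnNge kl.
  by rewrite upd_other // Hz ?il.
case: (eqVneq i kk) => [->|ik]; first by rewrite upd_same.
rewrite upd_other // Hz //; apply/orP; right.
rewrite ltn_neqAle ki andbT; apply: contra ik => /eqP e; apply/eqP; apply: val_inj.
by rewrite /= e.
Qed.

Lemma back (i0 : 'I_n) (hi0 : (i0 < l)%N) :
  (forall i, nonempty_graph (G i)) -> (forall i, vertex_transitive (G i)) ->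
  (forall k, (indep_ratio (G k) <= indep_ratio (G i0))%R) ->
  (forall k : 'I_n, (l <= k)%N -> (indep_ratio (G k) < indep_ratio (G i0))%R) ->
  MIS_normal H0fam -> (forall j : 'I_n, (l <= j)%N -> connected (G j)) -> MIS_normal G.
Proof.
move=> Hne HVT Hr Hlt MH Hc S /andP[Sind /eqP Smax].
set r := indep_ratio (G i0) in Hr Hlt *.
have alphaZ := alpha_prod i0 HVT (Vpos Hne i0) Hr.
have Scard : (#|S|%:R = r * #|Z|%:R :> rat)%R by rewrite Smax.
have inv : forall j : 'I_n, (l <= j)%N -> forall s, s \in S -> forall v, upd s j v \in S.
  by move=> j lj; exact: (inv_coord i0 S j Hne HVT Hr (Hlt j lj) (Hc j lj) Sind Scard).
have allin := inv_all S inv.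
set T := res @: S.
have SE : S = [set z : Z | res z \in T].
  apply/setP => z; rewrite inE; apply/idP/imsetP => [zS | [s sS E]]; first by exists z.
  exact: allin s z sS E.
pose j0 : 'I_l := Ordinal hi0.
have ej : wid j0 = i0 by apply: val_inj.
have HVT' : forall j, vertex_transitive (H0fam j) by move=> j; apply: HVT.
have Hne' : forall j, nonempty_graph (H0fam j) by move=> j; apply: Hne.
have rj : indep_ratio (H0fam j0) = r by rewrite /H0fam ej.
have Hr' : forall k, (indep_ratio (H0fam k) <= indep_ratio (H0fam j0))%R.
  by move=> k; rewrite rj; apply: Hr.
have alphaH := alpha_prod j0 HVT' (Vpos Hne' j0) Hr'.
rewrite rj in alphaH.
have mpos : (0 < mfib)%N by rewrite /mfib prodn_gt0 // => i; exact: Vpos Hne i.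
have Tcard : #|T| = alpha (prod_adj H0fam).
  have E : (#|S| = #|T| * mfib)%N by rewrite {1}SE card_preres.
  apply/eqP; rewrite -(eqn_pmul2r mpos) -E -(eqr_nat rat) Scard card_Z_H0 natrM mulrA -alphaH.
  by rewrite natrM.
have [nb Hnb] := nbr_ex Hne HVT.
have Tind : indep (prod_adj H0fam) T.
  apply/indepP => h h' /imsetP[s sS ->] /imsetP[s' s'S ->]; apply/negP => adjhh.
  pose z' : Z := [ffun i : 'I_n => if (i < l)%N then s' i else nb i (s i)].
  have z'S : z' \in S.
    apply: (allin s' z' s'S); apply/ffunP => j; rewrite !resE ffunE /=.
    by rewrite ltn_ord.
  have := (indepP Sind) s z' sS z'S; apply/negP/negPn.
  apply/forallP => i; rewrite ffunE; case: ltnP => il; last exact: Hnb.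
  have e : wid (Ordinal il) = i by apply: val_inj.
  by move/forallP: adjhh => /(_ (Ordinal il)); rewrite !resE /H0fam /= e.
have := MH T; rewrite /max_indep Tind Tcard eqxx => /(_ isT) [j [A [Aind TA]]].
exists (wid j), A; split => //.
by apply/setP => z; rewrite SE !inE TA inE resE.
Qed.

Lemma alphaH0 (i0 : 'I_n) (hi0 : (i0 < l)%N) :
  (forall i, nonempty_graph (G i)) -> (forall i, vertex_transitive (G i)) ->
  (forall k, (indep_ratio (G k) <= indep_ratio (G i0))%R) ->
  ((alpha (prod_adj H0fam))%:R = indep_ratio (G i0) * #|H0|%:R :> rat)%R.
Proof.
move=> Hne HVT Hr.
pose j0 : 'I_l := Ordinal hi0.
have ej : wid j0 = i0 by apply: val_inj.
have HVT' : forall j, vertex_transitive (H0fam j) by move=> j; apply: HVT.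
have Hne' : forall j, nonempty_graph (H0fam j) by move=> j; apply: Hne.
have rj : indep_ratio (H0fam j0) = indep_ratio (G i0) by rewrite /H0fam ej.
have Hr' : forall k, (indep_ratio (H0fam k) <= indep_ratio (H0fam j0))%R.
  by move=> k; rewrite rj; apply: Hr.
by rewrite -rj; exact: (alpha_prod j0 HVT' (Vpos Hne' j0) Hr').
Qed.

Lemma fwdA (i0 : 'I_n) (hi0 : (i0 < l)%N) :
  (forall i, nonempty_graph (G i)) -> (forall i, vertex_transitive (G i)) ->
  (forall k, (indep_ratio (G k) <= indep_ratio (G i0))%R) ->
  (forall k : 'I_n, (l <= k)%N -> (indep_ratio (G k) < indep_ratio (G i0))%R) ->
  MIS_normal G -> MIS_normal H0fam.
Proof.
move=> Hne HVT Hr Hlt MG T /andP[Tind /eqP Tmax].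
set r := indep_ratio (G i0) in Hr Hlt *.
have alphaZ := alpha_prod i0 HVT (Vpos Hne i0) Hr.
have alphaH := alphaH0 i0 hi0 Hne HVT Hr.
have mpos : (0 < mfib)%N by rewrite /mfib prodn_gt0 // => i; exact: Vpos Hne i.
set S := [set z : Z | res z \in T].
have Sind : indep (prod_adj G) S.
  apply/indepP => z w; rewrite !inE => zT wT; apply/negP => /res_adj.
  by apply/negP; apply: (indepP Tind).
have Scard : #|S| = alpha (prod_adj G).
  apply/eqP; rewrite -(eqr_nat rat) alphaZ card_preres Tmax natrM alphaH.
  by rewrite -mulrA -natrM -card_Z_H0.
have [i [A [Aind SA]]] := MG S (introT andP (conj Sind (introT eqP Scard))).
case: (ltnP i l) => il.
  have [j ej] : exists j : 'I_l, wid j = i by exists (Ordinal il); apply: val_inj.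
  subst i; exists j, A; split => //.
  apply/setP => h.
  have : (0 < #|[set z : Z | res z == h]|)%N by rewrite card_fib.
  case/card_gt0P => z; rewrite inE => /eqP zh.
  have : (z \in S) = (z \in [set x : Z | x (wid j) \in A]) by rewrite -SA.
  by rewrite !inE zh => ->; rewrite -zh resE.
exfalso.
have Ale := alpha_ge Aind.
have := card_pre i A; rewrite -SA Scard => E.
have Vi := Vpos Hne i.
have := Hlt i il; rewrite /indep_ratio ltr_pdivrMr ?ltr0n //.
have R0p : (0 < (@R0 _ G i)%:R :> rat)%R.
  by rewrite ltr0n /R0 prodn_gt0 // => k; exact: Vpos Hne k.
rewrite -(ltr_pM2r R0p).
have eq : (r * #|vt (G i)|%:R * (@R0 _ G i)%:R = r * #|Z|%:R)%R.
  by rewrite (card_Z i) natrM mulrA.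
rewrite eq -/r -alphaZ E -natrM ltr_nat.
by rewrite ltnNge leq_mul2r Ale orbT.
Qed.

Lemma fwdB (i0 : 'I_n) (hi0 : (i0 < l)%N) :
  (forall i, nonempty_graph (G i)) -> (forall i, vertex_transitive (G i)) ->
  (forall k, (indep_ratio (G k) <= indep_ratio (G i0))%R) ->
  MIS_normal G -> forall j : 'I_n, (l <= j)%N -> connected (G j).
Proof.
move=> Hne HVT Hr MG j lj x y; apply/idPn => nxy.
have ji0 : j != i0 by apply/eqP => e; move: hi0; rewrite -e ltnNge lj.
have i0j : i0 != j by rewrite eq_sym.
have Cc : forall a b, adj (G j) a b -> connect (adj (G j)) x a = connect (adj (G j)) x b.
  move=> a b ab; apply/idP/idP => H.
    by apply: connect_trans H (connect1 ab).
  by apply: connect_trans H (connect1 _); rewrite adj_sym.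
have [A [Aind Acard]] := alpha_att (adj (G i0)).
have [v vA] : exists v, v \notin A.
  case: (Hne i0) => a [b ab].
  case: (boolP (a \in A)) => aA; last by exists a.
  exists b; apply/negP => bA; move: (indepP Aind a b aA bA); rewrite ab.
  by [].
have [a' a'A] : exists a', a' \in A.
  have : (1 <= #|A|)%N.
    rewrite Acard; apply: (leq_trans _ (alpha_ge (S := [set v]) _)); first by rewrite cards1.
    by apply/indepP => p q; rewrite !inE => /eqP -> /eqP ->; rewrite adj_irr.
  by case/card_gt0P => a' a'A; exists a'.
case: (HVT i0 a' v) => f [[fb fadj] fa'].
have finj : injective f by apply: bij_inj.
set B := f @: A.
have vB : v \in B by rewrite -fa'; apply: imset_f.
have Bind : indep (adj (G i0)) B.
  by apply/indepP => p q /imsetP[p' p'A ->] /imsetP[q' q'A ->]; rewrite fadj; apply: (indepP Aind).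
have [a0 a0A a0B] : exists2 a0, a0 \in A & a0 \notin B.
  case: (boolP (A \subset B)) => [AB | /subsetPn [a0 ? ?]]; last by exists a0.
  have : A == B by rewrite eqEcard AB /B (card_imset _ finj) leqnn.
  by move/eqP => AB'; move: vA; rewrite AB' vB.
set S := [set z : Z | if connect (adj (G j)) x (z j) then z i0 \in A else z i0 \in B].
have Sind : indep (prod_adj G) S.
  apply/indepP => z w; rewrite !inE => zS wS; apply/negP => /forallP zw.
  have := Cc _ _ (zw j); move: zS wS.
  case: (connect (adj (G j)) x (z j)); case: (connect (adj (G j)) x (w j)) => // zA wA _.
    by move: (indepP Aind _ _ zA wA); rewrite zw.
  by move: (indepP Bind _ _ zA wA); rewrite zw.
pose phi (z : Z) : Z := if connect (adj (G j)) x (z j) then z else upd z i0 (f (z i0)).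
have phij : forall z, phi z j = z j.
  by move=> z; rewrite /phi; case: (connect (adj (G j)) x (z j)) => //; rewrite upd_other.
have phiinj : injective phi.
  move=> z w E.
  have Ej : z j = w j by rewrite -phij E phij.
  move: E; rewrite /phi Ej; case: (connect (adj (G j)) x (w j)) => // E.
  apply/ffunP => i; case: (eqVneq i i0) => [-> | ii0].
    by apply: finj; move: (congr1 (fun u : Z => u i0) E); rewrite /= !upd_same.
  by move: (congr1 (fun u : Z => u i) E); rewrite /= !upd_other.
set SA := [set z : Z | z i0 \in A].
have phiS : phi @: SA \subset S.
  apply/subsetP => _ /imsetP[z zA ->]; rewrite inE phij; rewrite inE in zA.
  rewrite /phi; case: (connect (adj (G j)) x (z j)) => //; rewrite upd_same.
  exact: imset_f.
have alphaZ := alpha_prod i0 HVT (Vpos Hne i0) Hr.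
have SAcard : #|SA| = alpha (prod_adj G).
  apply/eqP; rewrite -(eqr_nat rat) alphaZ /SA card_pre Acard (card_Z i0) natrM.
  rewrite /indep_ratio natrM mulrA divfK // pnatr_eq0 -lt0n; exact: Vpos Hne i0.
have Scard : #|S| = alpha (prod_adj G).
  apply/eqP; rewrite eqn_leq alpha_ge //= -SAcard -(card_imset _ phiinj).
  exact: subset_leq_card.
have [k [A' [_ SA']]] := MG S (introT andP (conj Sind (introT eqP Scard))).
have [z0 _] := z0_ex Hne.
pose z1 := upd (upd z0 i0 a0) j x.
have z1j : z1 j = x by rewrite upd_same.
have z1i : z1 i0 = a0 by rewrite upd_other // upd_same.
have z1S : z1 \in S by rewrite inE z1j connect0 z1i.
pose z2 := upd z1 j y.
have z2S : z2 \notin S.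
  by rewrite /z2 inE upd_same (negbTE nxy) upd_other // z1i.
pose z3 := upd z1 i0 v.
have z3S : z3 \notin S.
  by rewrite /z3 inE upd_other // z1j connect0 upd_same.
have memk : forall w : Z, w k = z1 k -> w \in S.
  move=> w wk; rewrite SA' inE wk.
  by move: z1S; rewrite SA' inE.
case: (eqVneq k j) => [kj | kj].
  have : k != i0 by rewrite kj.
  by move=> ki0; move: z3S; rewrite memk // upd_other.
by move: z2S; rewrite memk // upd_other.
Qed.

End Main.

Theorem proposition3p1 (n l : nat) (G : 'I_n -> graph)
  (hl0 : (0 < l)%N) (hln : (l < n)%N) :
  (forall i, nonempty_graph (G i)) ->
  (forall i, vertex_transitive (G i)) ->
  (forall i : 'I_n, forall j : 'I_n, (i <= j)%N -> (indep_ratio (G j) <= indep_ratio (G i))%R) ->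
  (forall i : 'I_n, (i < l)%N -> indep_ratio (G i) = indep_ratio (G (Ordinal (leq_ltn_trans (leq0n _) hln)))) ->
  (forall i : 'I_n, (l <= i)%N -> (indep_ratio (G i) < indep_ratio (G (Ordinal (leq_ltn_trans (leq0n _) hln))))%R) ->
  (indep_ratio (G (Ordinal (leq_ltn_trans (leq0n _) hln))) <= 1 / 2)%R ->
  (MIS_normal G <->
     (MIS_normal (fun i : 'I_l => G (widen_ord (ltnW hln) i)) /\
      forall i : 'I_n, (l <= i)%N -> connected (G i))).
Proof.
move=> Hne HVT Hmono Heq Hlt Hhalf.
pose i0 : 'I_n := Ordinal (leq_ltn_trans (leq0n _) hln).
have hi0 : (i0 < l)%N by [].
have Hr : forall k, (indep_ratio (G k) <= indep_ratio (G i0))%R.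
  by move=> k; apply: Hmono; exact: leq0n.
split.
  move=> MG; split.
    exact: (@fwdA n l G hln i0 hi0 Hne HVT Hr Hlt MG).
  exact: (@fwdB n l G i0 hi0 Hne HVT Hr MG).
case=> MH Hc; exact: (@back n l G hln i0 hi0 Hne HVT Hr Hlt MH Hc).
Qed.
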